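(* Let $\beta_1>0$, $\beta_2>0$ and $\beta_3\ge 0$ be real constants, and consider the linear system of partial differential equations for unknowns $p(x,t)$, $u(x,t)$, $x\in\mathbb{R}$, $t\ge 0$: \[ p_t + \beta_1 u_x - \beta_2\, \partial_t^3 p + \beta_3\, \partial_t^5 p = 0, \qquad u_t + p_x = 0 . \] Call a pair $(k,\omega)\in\mathbb{R}\times\mathbb{C}$ admissible if there exist constants $(\hat p,\hat u)\in\mathbb{C}^2\setminus\{(0,0)\}$ such that $p=\hat p\,e^{i(kx-\omega t)}$, $u=\hat u\,e^{i(kx-\omega t)}$ solves the system; equivalently, $\omega^2+\beta_2\omega^4+\beta_3\omega^6-\beta_1k^2=0$. Then: (i) for every $k\in\mathbb{R}$ there exists $\omega\in\mathbb{C}$ with $\operatorname{Im}\omega>0$ such that $(k,\omega)$ is admissible, i.e.\ the system is linearly unstable at every wavenumber (the corresponding plane wave grows exponentially in time); (ii) such $\omega=\omega(k)$ can be chosen so that $\operatorname{Im}\omega(k)\to+\infty$ as $|k|\to\infty$, so the initial value problem for the system is ill-posed.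
   Context: A plane wave $\hat p\,e^{i(kx-\omega t)}$ with $\operatorname{Im}\omega>0$ grows like $e^{(\operatorname{Im}\omega) t}$; unbounded growth rates as $|k|\to\infty$ mean the initial value problem is not well-posed in the sense of Hadamard. The case $\beta_3=0$ is included. *)

(* Defs.v *)
From mathcomp Require Import all_boot all_order all_algebra.
From mathcomp Require Import reals.
From mathcomp.real_closed Require Import complex.
Set Implicit Arguments. Unset Strict Implicit. Unset Printing Implicit Defensive.
Import Order.TTheory GRing.Theory Num.Theory.
Local Open Scope ring_scope.

(* Substituting p = ph e^{i(kx - w t)}, u = uh e^{i(kx - w t)} into
     p_t + b1 u_x - b2 d_t^3 p + b3 d_t^5 p = 0,   u_t + p_x = 0
   each derivative d_t acts as multiplication by (-i w) and d_x as (i k);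
   after cancelling the nonvanishing common factor e^{i(kx - w t)} one gets
   the following linear system for the amplitudes (ph, uh). *)
Definition plane_wave_solves (R : realType) (b1 b2 b3 k : R) (w ph uh : R[i]) : Prop :=
  let dt := - ('i)%C * w in
  let dx := ('i)%C * (k%:C)%C in
  dt * ph + (b1%:C)%C * (dx * uh) - (b2%:C)%C * (dt ^+ 3 * ph) + (b3%:C)%C * (dt ^+ 5 * ph) = 0
  /\ dt * uh + dx * ph = 0.

Definition admissible (R : realType) (b1 b2 b3 k : R) (w : R[i]) : Prop :=
  exists ph uh : R[i], (ph, uh) != (0, 0) /\ plane_wave_solves b1 b2 b3 k w ph uh.

(* Main.v *)
Require Import Defs.
From mathcomp Require Import all_boot all_order all_algebra.
From mathcomp Require Import reals.
From mathcomp.real_closed Require Import complex polyrcf.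
From mathcomp Require Import ring lra.
From Stdlib Require ClassicalEpsilon.
Import Order.TTheory GRing.Theory Num.Theory.
Local Open Scope ring_scope.
Local Open Scope complex_scope.
Lemma cubic_root (R : realType) (b2 b3 c : R) (hb2 : 0 < b2) (hb3 : 0 <= b3) (hc : 0 <= c) :
  exists z1 : R, 0 <= z1 /\ b3 * z1 ^+ 3 + b2 * z1 ^+ 2 + z1 = c.
Proof.
pose p : {poly R} := b3%:P * 'X^3 + b2%:P * 'X^2 + 'X - c%:P.
have h0 : p.[0] = - c by rewrite /p !(hornerD, hornerN, hornerCM, hornerC, hornerXn, hornerX) /=; simpl; lra.
have h1 : 0 <= p.[c + 1].
  rewrite /p !(hornerD, hornerN, hornerCM, hornerC, hornerXn, hornerX).
  have : 0 <= b3 * (c+1)^+3 by apply: mulr_ge0 => //; apply: exprn_ge0; lra.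
  have : 0 <= b2 * (c+1)^+2 by apply: mulr_ge0; [lra| apply: exprn_ge0; lra].
  lra.
have [x /andP[] hx0 _ /rootP hx] : {x | x \in `[0, c + 1] & root p x}.
  apply: polyrcf.poly_ivt; first lra.
  rewrite h0; rewrite mulNr oppr_le0; apply: mulr_ge0 => //.
exists x; split => //.
move: hx; rewrite /p !(hornerD, hornerN, hornerCM, hornerC, hornerXn, hornerX); lra.
Qed.
Lemma quad_root (R : realType) (b2 b3 z1 : R) (hb2 : 0 < b2) (hb3 : 0 <= b3) (hz1 : 0 <= z1) :
  exists z : R[i],
    b3%:C * z ^+ 2 + (b2 + b3 * z1)%:C * z + (1 + b2 * z1 + b3 * z1 ^+ 2)%:C = 0
    /\ complex.Re z < 0 /\ z1 <= - 2 * complex.Re z.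
Proof.
set p := b2 + b3 * z1; set q := 1 + b2 * z1 + b3 * z1 ^+ 2.
have hp : 0 < p by rewrite /p; have := mulr_ge0 hb3 hz1; lra.
have hq : q = 1 + p * z1 by rewrite /q /p; ring.
have hq0 : 0 < q by rewrite hq; have := mulr_ge0 (ltW hp) hz1; lra.
have [b30|b3pos] := eqVneq b3 0.
  exists ((- (q / p)) +i* 0).
  split; [|split] => /=.
  - rewrite expr2; apply/eqP; rewrite eq_complex /= b30.
    apply/andP; split; apply/eqP; last by ring.
    field; lra.
  - rewrite oppr_lt0; exact: divr_gt0.
  - rewrite mulNr mulrN opprK.
    have : z1 <= q / p.
      by rewrite ler_pdivlMr // hq; lra.
    lra.
have hb3p : 0 < b3 by rewrite lt_def b3pos.
set D := p ^+ 2 - 4 * b3 * q.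
have [hD|hD] := lerP 0 D.
  set r := Num.sqrt D.
  have hr : r ^+ 2 = D by rewrite sqr_sqrtr.
  have hr0 : 0 <= r by rewrite sqrtr_ge0.
  set a := (- p - r) / (2 * b3).
  have ha : 2 * b3 * a = - p - r by rewrite /a; field; lra.
  exists (a +i* 0).
  split; [|split] => /=.
  - rewrite expr2; apply/eqP; rewrite eq_complex /=.
    have key : b3 * a ^+ 2 + p * a + q = 0.
      apply: (@mulfI _ (4 * b3)); first lra.
      rewrite mulr0.
      have -> : 4 * b3 * (b3 * a ^+ 2 + p * a + q)
        = (2 * b3 * a) ^+ 2 + 2 * p * (2 * b3 * a) + 4 * b3 * q by ring.
      rewrite ha; rewrite /D in hr.
      have -> : (- p - r) ^+ 2 + 2 * p * (- p - r) + 4 * b3 * q = r ^+ 2 - (p ^+ 2 - 4 * b3 * q) by ring.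
      by rewrite hr subrr.
    apply/andP; split; apply/eqP; last by ring.
    apply: (etrans _ key); ring.
  - nra.
  - have h1 : b3 * z1 <= b3 * (- 2 * a).
      have -> : b3 * (- 2 * a) = - (2 * b3 * a) by ring.
      rewrite ha /p; lra.
    by rewrite ler_pM2l in h1.
set r := Num.sqrt (- D).
have hr : r ^+ 2 = - D by rewrite sqr_sqrtr //; lra.
set a := - p / (2 * b3).
have ha : 2 * b3 * a = - p by rewrite /a; field; lra.
set s := r / (2 * b3).
have hs : 2 * b3 * s = r by rewrite /s; field; lra.
exists (a +i* s).
split; [|split] => /=.
- rewrite expr2; apply/eqP; rewrite eq_complex /=.
  have key : b3 * (a ^+ 2 - s ^+ 2) + p * a + q = 0.
    apply: (@mulfI _ (4 * b3)); first lra.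
    rewrite mulr0.
    have -> : 4 * b3 * (b3 * (a ^+ 2 - s ^+ 2) + p * a + q)
      = (2 * b3 * a) ^+ 2 - (2 * b3 * s) ^+ 2 + 2 * p * (2 * b3 * a) + 4 * b3 * q by ring.
    rewrite ha hs hr /D; ring.
  have key2 : s * (2 * b3 * a + p) = 0 by rewrite ha addNr mulr0.
  apply/andP; split; apply/eqP.
    apply: (etrans _ key); ring.
  apply: (etrans _ key2); ring.
- nra.
- have h1 : b3 * z1 <= b3 * (- 2 * a).
    have -> : b3 * (- 2 * a) = - (2 * b3 * a) by ring.
    rewrite ha /p; lra.
  by rewrite ler_pM2l in h1.
Qed.

Lemma key (R : realType) (b1 b2 b3 : R)
  (hb1 : 0 < b1) (hb2 : 0 < b2) (hb3 : 0 <= b3) (k : R) :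
  exists w : R[i], (0 < complex.Im w /\ admissible b1 b2 b3 k w) /\
    exists z1 : R, 0 <= z1 /\ b3 * z1 ^+ 3 + b2 * z1 ^+ 2 + z1 = b1 * k ^+ 2
       /\ z1 <= 2 * (complex.Im w) ^+ 2.
Proof.
have hc : 0 <= b1 * k ^+ 2 by apply: mulr_ge0; [lra| exact: sqr_ge0].
have [z1 [hz1 hz1e]] := @cubic_root R b2 b3 _ hb2 hb3 hc.
have [z [hQ [hRe hRe2]]] := @quad_root R b2 b3 z1 hb2 hb3 hz1.
have hg : b3%:C * z ^+ 3 + b2%:C * z ^+ 2 + z - b1%:C * (k%:C) ^+ 2 = 0.
  have -> : b1%:C * (k%:C) ^+ 2 = (b1 * k ^+ 2)%:C by rewrite rmorphM rmorphXn.
  rewrite -hz1e.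
  have -> : b3%:C * z ^+ 3 + b2%:C * z ^+ 2 + z - (b3 * z1 ^+ 3 + b2 * z1 ^+ 2 + z1)%:C
     = (z - z1%:C) * (b3%:C * z ^+ 2 + (b2 + b3 * z1)%:C * z + (1 + b2 * z1 + b3 * z1 ^+ 2)%:C).
    rewrite !rmorphD !rmorphM rmorph1 /=; ring.
  by rewrite hQ; exact: mulr0.
pose w0 := sqrtc z.
pose w := if 0 <= complex.Im w0 then w0 else - w0.
have hw2 : w ^+ 2 = z by rewrite /w; case: ifP => _; rewrite ?sqrrN sqr_sqrtc.
have hwIm : 0 <= complex.Im w.
  rewrite /w; case: ifP => // /negbT; rewrite -ltNge => h.
  rewrite /=. case: (w0) h => a b /= h; lra.
have hRe' : complex.Re z = (complex.Re w) ^+ 2 - (complex.Im w) ^+ 2.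
  rewrite -hw2; case: (w) => a b; rewrite !expr2 /=; ring.
have hIm2 : z1 <= 2 * (complex.Im w) ^+ 2.
  have := sqr_ge0 (complex.Re w); lra.
have hImpos : 0 < complex.Im w.
  rewrite lt_def hwIm andbT; apply/eqP => h.
  move: hRe'; rewrite h (expr2 0) mulr0 subr0 => h'.
  have := sqr_ge0 (complex.Re w); lra.
have wn0 : w != 0.
  apply/eqP => h; move: hImpos; rewrite h /=; lra.
exists w; split; last by exists z1.
split => //.
rewrite /admissible /plane_wave_solves /=.
exists 1, (k%:C / w); split.
  by rewrite xpair_eqE oner_eq0.
set I := ('i)%C.
have hI2 : I ^+ 2 = -1 by exact: sqr_i.
split; last by field.
set dt := - I * w.
have hI : I = - dt / w by rewrite /dt; field.
have hdt2 : dt ^+ 2 = - w ^+ 2 by rewrite /dt exprMn sqrrN hI2 mulN1r.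
rewrite hI.
have -> : dt * 1 + b1%:C * (- dt / w * k%:C * (k%:C / w)) - b2%:C * (dt ^+ 3 * 1) + b3%:C * (dt ^+ 5 * 1)
   = dt / w ^+ 2 * (w ^+ 2 - b1%:C * k%:C ^+ 2 - b2%:C * dt ^+ 2 * w ^+ 2 + b3%:C * (dt ^+ 2) ^+ 2 * w ^+ 2).
  by field.
rewrite hdt2 hw2.
have -> : z - b1%:C * k%:C ^+ 2 - b2%:C * - z * z + b3%:C * (- z) ^+ 2 * z
  = b3%:C * z ^+ 3 + b2%:C * z ^+ 2 + z - b1%:C * (k%:C) ^+ 2 by ring.
by rewrite hg mulr0.
Qed.

Theorem mainTheorem1 (R : realType) (b1 b2 b3 : R)
  (hb1 : 0 < b1) (hb2 : 0 < b2) (hb3 : 0 <= b3) :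
  (forall k : R, exists w : R[i], 0 < complex.Im w /\ admissible b1 b2 b3 k w)
  /\
  (exists w : R -> R[i],
     (forall k : R, 0 < complex.Im (w k) /\ admissible b1 b2 b3 k (w k)) /\
     (forall M : R, exists K : R, forall k : R, K < `|k| -> M < complex.Im (w k))).
Proof.
have KK := @key R b1 b2 b3 hb1 hb2 hb3.
pose w := fun k => proj1_sig (ClassicalEpsilon.constructive_indefinite_description _ (KK k)).
have hw k := proj2_sig (ClassicalEpsilon.constructive_indefinite_description _ (KK k)).
split.
  by move=> k; have [[h1 h2] _] := hw k; exists (w k).
exists w; split; first by move=> k; have [h _] := hw k.
move=> M.
set A := 2 * M ^+ 2.
have hA0 : 0 <= A by rewrite /A; have := sqr_ge0 M; lra.
set B := b3 * A ^+ 3 + b2 * A ^+ 2 + A.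
have hB0 : 0 <= B.
  have := mulr_ge0 hb3 (exprn_ge0 3 hA0).
  have := mulr_ge0 (ltW hb2) (exprn_ge0 2 hA0).
  rewrite /B; lra.
exists ((B + 1) / b1 + 1) => k hk.
have [[hy _] [z1 [hz1 [he hle]]]] := hw k.
rewrite -/(w k) in hy hle *.
have hK0 : 0 <= (B + 1) / b1 by apply: divr_ge0; lra.
have hk1 : 1 < `|k| by lra.
have hbk : B < b1 * k ^+ 2.
  rewrite -real_normK ?num_real //.
  have h1 : `|k| <= `|k| ^+ 2 by rewrite expr2 ler_peMl //; lra.
  have h2 : b1 * ((B + 1) / b1 + 1) < b1 * `|k| by rewrite ltr_pM2l.
  have h3 : b1 * ((B + 1) / b1 + 1) = B + 1 + b1 by field; lra.
  have h4 : b1 * `|k| <= b1 * `|k| ^+ 2 by rewrite ler_pM2l.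
  lra.
have hAz : A < z1.
  rewrite ltNge; apply/negP => hz.
  have e2 : z1 ^+ 2 <= A ^+ 2 by rewrite !expr2; apply: ler_pM.
  have e3 : z1 ^+ 3 <= A ^+ 3.
    rewrite (exprS z1 2) (exprS A 2); apply: ler_pM => //; exact: exprn_ge0.
  have f3 : b3 * z1 ^+ 3 <= b3 * A ^+ 3 by apply: ler_wpM2l.
  have f2 : b2 * z1 ^+ 2 <= b2 * A ^+ 2 by apply: ler_wpM2l; lra.
  rewrite /B in hbk; lra.
rewrite /A in hAz.
nra.
Qed.
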